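(* Let $x,y\in[-2^l,2^l]$ be integers and let $\llbracket x\rrbracket,\llbracket y\rrbracket$ be FastPai encryptions of $x,y$ held by $S_0$. Run protocol $\mathtt{SCMP}_{\mathrm{HSS}}$: (i) $S_0$ picks integers $r_1\in\{1,\dots,2^\sigma-1\}$ and $r_2$ with $r_2\le N/2$ and $r_1+r_2>N/2$, and a bit $\pi\in\{0,1\}$. If $\pi=0$ it sets $D=(\llbracket x\rrbracket\cdot\llbracket y\rrbracket^{-1}\cdot\llbracket 1\rrbracket)^{r_1}\bmod N^2$, else $D=(\llbracket y\rrbracket\cdot\llbracket x\rrbracket^{-1})^{r_1}\bmod N^2$. It computes $z_0=\mathrm{DDLog}_N(D^{\langle 2\alpha\rangle_0}\bmod N^2)-r_2$ and sends $(D,z_0)$ to $S_1$. (ii) $S_1$ computes $z_1=\mathrm{DDLog}_N(D^{\langle 2\alpha\rangle_1}\bmod N^2)$ and $d=z_1-z_0\bmod N\in[0,N)$; it sets $\llbracket\mu_0\rrbracket=\llbracket 0\rrbracket$ if $d>N/2$ and $\llbracket\mu_0\rrbracket=\llbracket 1\rrbracket$ if $d\le N/2$, and sends $\llbracket\mu_0\rrbracket$ to $S_0$. (iii) If $\pi=0$, $S_0$ sets $\llbracket\mu\rrbracket=\llbracket\mu_0\rrbracket$, else $\llbracket\mu\rrbracket=\llbracket 1\rrbracket\cdot\llbracket\mu_0\rrbracket^{-1}\bmod N^2$; finally it sets $\llbracket\mu\rrbracket\leftarrow\llbracket\mu\rrbracket\cdot\llbracket 0\rrbracket\bmod N^2$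 and outputs it. Then the output $\llbracket\mu\rrbracket$ is an encryption of $0$ if $x\ge y$ and an encryption of $1$ if $x<y$ (i.e. $\mathrm{Dec}(\llbracket\mu\rrbracket)=0$ if $x\ge y$ and $=1$ if $x<y$).
   Context: FastPai: for a security parameter $\kappa$, $l(\kappa)=4\kappa$. $N=PQ$ with $P,Q$ primes of $n(\kappa)/2$ bits, $p,q$ odd primes of $l(\kappa)/2$ bits, $p\mid P-1$, $q\mid Q-1$, $P\equiv Q\equiv3\pmod4$, $\gcd(P-1,Q-1)=2$, $\gcd(pq,(P-1)(Q-1)/(4pq))=1$. Private key $\alpha=pq$ (an $l(\kappa)$-bit number); $\beta=(P-1)(Q-1)/(4pq)$; $h=-y_0^{2\beta}\bmod N$ for random $y_0\in\mathbb{Z}_N^*$; public key $(N,h)$. $\mathrm{Enc}(m)=(1+N)^m(h^r\bmod N)^N\bmod N^2$, $r$ uniform in $\{0,1\}^{l(\kappa)}$, written $\llbracket m\rrbracket$; $\mathrm{Dec}(c)=L(c^{2\alpha}\bmod N^2)(2\alpha)^{-1}\bmod N$, $L(u)=(u-1)/N$. Negative integers $m$ are encoded as $N-|m|$. Ciphertext inverses and exponentiations are in $\mathbb{Z}_{N^2}^*$. $\mathrm{DDLog}_N(g)=\lfloor g/N\rfloor\cdot(g\bmod N)^{-1}\bmod N$ for $g\in[0,N^2)$ with $g\bmod N$ invertible mod $N$. $\langle 2\alpha\rangle_0,\langle 2\alpha\rangle_1$ are integers held by $S_0$, $S_1$ respectively with $\langle 2\alpha\rangle_1-\langle 2\alpha\rangle_0=2\alpha$;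 $\llbracket 0\rrbracket,\llbracket 1\rrbracket$ are encryptions of $0,1$ known to both servers. $\sigma$ is a parameter (e.g. $\sigma=128$). Standing parameter assumption: $N/2>2^{l+1+\sigma+l(\kappa)+1}+2^{\sigma+l(\kappa)+1}$ (the paper's parameters, e.g. $|N|=3072$, $l(\kappa)=512$, $\sigma=128$, $l=32$, satisfy this). *)

(* Defs.v *)
From mathcomp Require Import all_boot all_order all_algebra.
Set Implicit Arguments. Unset Strict Implicit. Unset Printing Implicit Defensive.
Import Order.TTheory GRing.Theory Num.Theory.
Local Open Scope ring_scope.

(* modular inverse of [a] modulo [n], as a representative in [0, n)
   (meaningful when gcd(a, n) = 1), via the Bezout coefficient *)
Definition inv_mod (a n : int) : int := modz (egcdz a n).1 n.

Definition pow_mod (g e n : int) : int :=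
  match e with
  | Posz k => modz (g ^+ k) n
  | Negz k => modz (inv_mod g n ^+ k.+1) n
  end.

Definition Lfun (N u : int) : int := divz (u - 1) N.

(* FastPai encryption with randomness r : Enc(m) = (1+N)^m (h^r mod N)^N mod N^2;
   an integer m (possibly negative) is encoded as m mod N (= N - |m| if -N < m < 0). *)
Definition fp_enc (N h m : int) (r : nat) : int :=
  modz (pow_mod (1 + N) (modz m N) (N ^+ 2) * pow_mod (modz (h ^+ r) N) N (N ^+ 2))
       (N ^+ 2).

Definition fp_dec (N alpha c : int) : int :=
  modz (Lfun N (pow_mod c (2 * alpha) (N ^+ 2)) * inv_mod (2 * alpha) N) N.

Definition ddlog (N g : int) : int :=
  modz (divz g N * inv_mod (modz g N) N) N.

(* The protocol SCMP_HSS; returns the output ciphertext [[mu]] of S_0.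
   s0, s1 : the shares <2alpha>_0, <2alpha>_1; c0, c1 : [[0]], [[1]];
   cx, cy : [[x]], [[y]]; r1, r2, pi : the random choices of S_0. *)
Definition scmp_hss (N s0 s1 c0 c1 cx cy r1 r2 : int) (pi : bool) : int :=
  let N2 := N ^+ 2 in
  let D := if ~~ pi then pow_mod (modz (modz (cx * inv_mod cy N2) N2 * c1) N2) r1 N2
           else pow_mod (modz (cy * inv_mod cx N2) N2) r1 N2 in
  let z0 := ddlog N (pow_mod D s0 N2) - r2 in
  let z1 := ddlog N (pow_mod D s1 N2) in
  let d := modz (z1 - z0) N in
  let mu0 := if N < 2 * d then c0 else c1 in
  let mu := if ~~ pi then mu0 else modz (c1 * inv_mod mu0 N2) N2 in
  modz (mu * c0) N2.

(* Main.v *)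
Require Import Defs.
From mathcomp Require Import all_boot all_order all_algebra.
From mathcomp Require Import cyclic zify ring lra.
Import Order.TTheory GRing.Theory Num.Theory.
Local Open Scope ring_scope.

Lemma cong_eq (a b k n : int) : a = b + k * n -> (a = b %[mod n])%Z.
Proof. by move=> ->; rewrite addrC modzMDl. Qed.

Lemma cong_dvd (a b n : int) : (a = b %[mod n])%Z -> exists k, a = b + k * n.
Proof.
move/eqP; rewrite eqz_mod_dvd => /dvdzP [k hk]; exists k.
by rewrite -hk addrC subrK.
Qed.

Lemma inv_modP (c n : int) : coprimez c n -> (c * inv_mod c n = 1 %[mod n])%Z.
Proof.
rewrite /inv_mod; case: egcdzP => u v Huv _ /= /eqP Hg.
rewrite modzMmr mulrC; apply: (@cong_eq _ _ (- v)).
rewrite Hg in Huv; rewrite -Huv; ring.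
Qed.

Lemma unit_coprime (c v n : int) : (c * v = 1 %[mod n])%Z -> coprimez c n.
Proof.
move/cong_dvd=> [k hk]; apply/coprimezP; exists (v, -k) => /=.
rewrite mulrC hk; ring.
Qed.


Lemma pow_mod_succ (g e n : int) : coprimez g n ->
  (pow_mod g (e + 1) n = pow_mod g e n * g %[mod n])%Z.
Proof.
move=> cg; have Hi := inv_modP _ _ cg.
case: e => [k|k].
  rewrite /pow_mod -PoszD addn1 modzMml modz_mod exprSr //.
case: k => [|k].
  have -> : Negz 0 + 1 = 0 by [].
  rewrite /pow_mod /= modz_mod modzMml expr1 mulrC Hi //.
have -> : Negz k.+1 + 1 = Negz k by rewrite !NegzE; lia.
rewrite /pow_mod modz_mod modzMml; set i := inv_mod g n.
rewrite [i ^+ k.+2]exprSr -mulrA -modzMmr [i * g]mulrC Hi modzMmr mulr1 //.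
Qed.

Lemma pow_mod_add (g e n : int) (k : nat) : coprimez g n ->
  (pow_mod g (e + k%:Z) n = pow_mod g e n * g ^+ k %[mod n])%Z.
Proof.
move=> cg; elim: k => [|k IH].
  by rewrite addr0 expr0 mulr1.
have -> : (k.+1)%:Z = k%:Z + 1 by rewrite -addn1 PoszD.
rewrite addrA pow_mod_succ // -modzMml IH modzMml exprSr mulrA //.
Qed.


Lemma binomN (N t : int) (k : nat) :
  ((1 + t * N) ^+ k = 1 + k%:Z * t * N %[mod N ^+ 2])%Z.
Proof.
elim: k => [|k IH]; first by rewrite expr0 mul0r mul0r addr0.
rewrite exprSr -modzMml IH modzMml; apply: (@cong_eq _ _ (k%:Z * t * t)).
rewrite -addn1 PoszD; ring.
Qed.

Lemma coprime_cong (c c' n : int) : (c = c' %[mod n])%Z -> coprimez c n -> coprimez c' n.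
Proof.
move=> e cc; have := inv_modP _ _ cc; rewrite -modzMml e modzMml.
exact: unit_coprime.
Qed.

Lemma coprime_mul (c c' n : int) : coprimez c n -> coprimez c' n -> coprimez (c * c') n.
Proof.
move=> h1 h2; have := inv_modP _ _ h1; have := inv_modP _ _ h2.
move=> e2 e1; apply: (@unit_coprime _ (inv_mod c n * inv_mod c' n)).
rewrite mulrACA -modzMml -modzMmr e1 e2 modzMml modzMmr mulr1 //.
Qed.

Lemma coprime_exp (c n : int) (k : nat) : coprimez c n -> coprimez (c ^+ k) n.
Proof.
move=> h; elim: k => [|k IH].
  by rewrite expr0; apply: (@unit_coprime _ 1); rewrite mulr1.
by rewrite exprSr coprime_mul.
Qed.

Lemma coprime_inv (c n : int) : coprimez c n -> coprimez (inv_mod c n) n.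
Proof.
move=> h; apply: (@unit_coprime _ c); rewrite mulrC; exact: inv_modP.
Qed.

Lemma coprime_modz (c n : int) : coprimez c n -> coprimez (c %% n)%Z n.
Proof. by move=> h; apply: coprime_cong h; rewrite modz_mod. Qed.

Definition Gd (N : int) (a : nat) (c m : int) :=
  coprimez c (N ^+ 2) /\ (c ^+ a = 1 + a%:Z * m * N %[mod N ^+ 2])%Z.

Section G.
Variables (N : int) (a : nat).

Lemma G_congr c c' m m' : (c = c' %[mod N ^+ 2])%Z -> (m = m' %[mod N])%Z ->
  Gd N a c m -> Gd N a c' m'.
Proof.
move=> ec em [cc ce]; split; first exact: coprime_cong cc.
rewrite -modzXm -ec modzXm ce.
have [k hk] := cong_dvd _ _ _ em.
apply: (@cong_eq _ _ (a%:Z * k)); rewrite hk. ring.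
Qed.

Lemma G_mul c c' m m' : Gd N a c m -> Gd N a c' m' -> Gd N a (c * c') (m + m').
Proof.
move=> [h1 e1] [h2 e2]; split; first exact: coprime_mul.
rewrite exprMn -modzMml e1 modzMml -modzMmr e2 modzMmr.
apply: (@cong_eq _ _ (a%:Z * m * a%:Z * m')); ring.
Qed.

Lemma G_exp c m (k : nat) : Gd N a c m -> Gd N a (c ^+ k) (k%:Z * m).
Proof.
move=> [h1 e1]; split; first exact: coprime_exp.
rewrite -exprM mulnC exprM -modzXm e1 modzXm.
rewrite binomN; congr (_ %% _)%Z; ring.
Qed.

Lemma G_inv c m : Gd N a c m -> Gd N a (inv_mod c (N ^+ 2)) (- m).
Proof.
move=> [h1 e1]; split; first exact: coprime_inv.
set i := inv_mod c (N ^+ 2).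
have hi : (c * i = 1 %[mod N ^+ 2])%Z by exact: inv_modP.
have hia : ((c * i) ^+ a = 1 %[mod N ^+ 2])%Z by rewrite -modzXm hi modzXm expr1n.
rewrite exprMn in hia.
have : (i ^+ a * (c ^+ a * (1 - a%:Z * m * N)) = i ^+ a %[mod N ^+ 2])%Z.
  have e1' : (c ^+ a * (1 - a%:Z * m * N) = 1 %[mod N ^+ 2])%Z.
    rewrite -modzMml e1 modzMml; apply: (@cong_eq _ _ (- (a%:Z * m) ^+ 2)); ring.
  by rewrite -modzMmr e1' modzMmr mulr1.
move=> <-; rewrite mulrA [i ^+ a * _]mulrC -modzMml hia modzMml mul1r.
by congr (_ %% _)%Z; ring.
Qed.

Lemma G_pow c m e : Gd N a c m -> Gd N a (pow_mod c e (N ^+ 2)) (e * m).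
Proof.
move=> hg; case: e => [k|k] /=.
  apply: (@G_congr (c ^+ k) _ (k%:Z * m)); rewrite ?modz_mod //.
  exact: G_exp.
apply: (@G_congr (inv_mod c (N ^+ 2) ^+ k.+1) _ (k.+1%:Z * (- m))).
- by rewrite modz_mod.
- by rewrite NegzE mulrN mulNr.
exact/G_exp/G_inv.
Qed.
End G.


Lemma cong_sq (N x y : int) : (x = y %[mod N ^+ 2])%Z -> (x = y %[mod N])%Z.
Proof.
move/cong_dvd=> [k ->]; apply: (@cong_eq _ _ (k * N)); ring.
Qed.

Lemma coprime_sq (g N : int) : coprimez g (N ^+ 2) -> coprimez g N.
Proof.
move=> h; apply: (@unit_coprime _ (inv_mod g (N ^+ 2))); apply: cong_sq.
exact: inv_modP.
Qed.

Lemma pow_N (n : nat) (x : int) : (x = 1 %[mod n%:Z])%Z -> (x ^+ n = 1 %[mod n%:Z ^+ 2])%Z.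
Proof.
move/cong_dvd=> [j ->]; rewrite binomN; apply: (@cong_eq _ _ j); ring.
Qed.

Lemma G_one (N : int) (a : nat) : Gd N a (1 + N) 1.
Proof.
split.
  apply: (@unit_coprime _ (1 - N)); apply: (@cong_eq _ _ (-1)); ring.
have := binomN N 1 a; rewrite mul1r => ->; congr (_ %% _)%Z; ring.
Qed.

Lemma G_w (n a : nat) (w : int) : (0 < a)%N -> (w ^+ a = 1 %[mod n%:Z])%Z ->
  Gd n%:Z a (pow_mod w n%:Z (n%:Z ^+ 2)) 0.
Proof.
move=> a0 hw; apply: (@G_congr _ _ (w ^+ n) _ 0 0); rewrite /= ?modz_mod //.
split.
  apply: (@unit_coprime _ ((w ^+ a.-1) ^+ n)); rewrite -exprMn -exprS prednK //.
  exact: pow_N.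
by rewrite -exprM mulnC exprM pow_N // mulr0 mul0r addr0.
Qed.

Lemma G_enc (n a : nat) (h m : int) (r : nat) : (0 < a)%N ->
  (h ^+ a = 1 %[mod n%:Z])%Z -> Gd n%:Z a (fp_enc n%:Z h m r) m.
Proof.
move=> a0 hh; rewrite /fp_enc.
apply: (@G_congr _ _ _ _ ((m %% n%:Z)%Z * 1 + 0)).
- by rewrite modz_mod.
- by rewrite mulr1 addr0 modz_mod.
apply: G_mul; first exact/G_pow/G_one.
apply: G_w => //.
rewrite modzXm -exprM mulnC exprM -modzXm hh modzXm expr1n //.
Qed.

Lemma ddlog_shift (N g g' k : int) : N != 0 -> coprimez g (N ^+ 2) ->
  (g' = g * (1 + k * N) %[mod N ^+ 2])%Z -> ddlog N g' = ((ddlog N g + k) %% N)%Z.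
Proof.
move=> N0 cg e.
have e1 : (g' = g %[mod N])%Z.
  by rewrite (cong_sq _ _ _ e); apply: (@cong_eq _ _ (g * k)); ring.
have c0 : coprimez (g %% N)%Z N by apply/coprime_modz/coprime_sq.
have [s hs] := cong_dvd _ _ _ (inv_modP _ _ c0).
have [j hj] := cong_dvd _ _ _ e.
rewrite /ddlog e1 modzDml; set i := inv_mod _ _.
have hg := divz_eq g N; have hg' := divz_eq g' N.
set g1 := (g %/ N)%Z in hg *; set g1' := (g' %/ N)%Z in hg' *.
set g0 := (g %% N)%Z in hg hs c0 i *.
have Eg1 : g1' = g1 + g0 * k + (g1 * k + j) * N.
  apply: (mulIf N0); have : g1' * N + (g' %% N)%Z = g' by [].
  rewrite e1 -/g0 hj hg => H.
  have -> : g1' * N = g1' * N + g0 - g0 by ring.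
  rewrite H; ring.
apply: (@cong_eq _ _ (k * s + (g1 * k + j) * i)).
rewrite Eg1; have hs' : g0 * i = 1 + s * N := hs.
transitivity (g1 * i + k * (g0 * i) + (g1 * k + j) * N * i); first ring.
rewrite hs'; ring.
Qed.

Lemma dec_G (N : int) (alpha : nat) (c m : int) : 1 < N ->
  coprimez (2 * alpha)%N%:Z N -> Gd N (2 * alpha)%N c m ->
  fp_dec N alpha%:Z c = (m %% N)%Z.
Proof.
move=> N1 ca [cc ce]; set a := (2 * alpha)%N in ca ce *.
have N0 : N != 0 by rewrite gt_eqF // (lt_trans _ N1).
rewrite /fp_dec (_ : 2 * alpha%:Z = a%:Z); last by rewrite /a PoszM.
rewrite /pow_mod ce.
set r := ((a%:Z * m) %% N)%Z.
have r0 : 0 <= r by rewrite modz_ge0.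
have rN : r < N by have := ltz_mod (a%:Z * m) N0; rewrite gtr0_norm // (lt_trans _ N1).
have -> : ((1 + a%:Z * m * N) %% N ^+ 2)%Z = 1 + r * N.
  rewrite -(@modz_small (1 + r * N) (N ^+ 2)); last by apply/andP; split; nia.
  apply: (@cong_eq _ _ ((a%:Z * m) %/ N)%Z).
  have := divz_eq (a%:Z * m) N; rewrite -/r => {1}->; ring.
rewrite /Lfun (_ : 1 + r * N - 1 = r * N); last by ring.
rewrite mulzK // /r modzMml.
have [s hs] := cong_dvd _ _ _ (inv_modP _ _ ca).
apply: (@cong_eq _ _ (m * s)).
transitivity (m * (a%:Z * inv_mod a N)); first ring.
rewrite hs; ring.
Qed.


Lemma G_modz N a c m : Gd N a c m -> Gd N a (c %% N ^+ 2)%Z m.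
Proof. by apply: G_congr; rewrite ?modz_mod. Qed.

Lemma proto (N : int) (a : nat) s0 s1 c0 c1 cx cy x y r1 r2 (pi : bool) :
  1 < N -> s1 - s0 = a%:Z ->
  Gd N a c0 0 -> Gd N a c1 1 -> Gd N a cx x -> Gd N a cy y ->
  let A := if ~~ pi then r1 * (x - y + 1) else r1 * (y - x) in
  let m0 : int := if N < 2 * ((a%:Z * A + r2) %% N)%Z then 0 else 1 in
  Gd N a (scmp_hss N s0 s1 c0 c1 cx cy r1 r2 pi)
     ((if ~~ pi then m0 else 1 + - m0) + 0).
Proof.
move=> N1 hs G0 G1 Gx Gy A m0.
have N0 : N != 0 by rewrite gt_eqF // (lt_trans _ N1).
set D := if ~~ pi then pow_mod (modz (modz (cx * inv_mod cy (N ^+ 2)) (N ^+ 2) * c1) (N ^+ 2)) r1 (N ^+ 2)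
         else pow_mod (modz (cy * inv_mod cx (N ^+ 2)) (N ^+ 2)) r1 (N ^+ 2).
have GD : Gd N a D A.
  rewrite /D /A; case: (pi) => /=.
    by apply/G_pow/G_modz/G_mul/G_inv.
  by apply/G_pow/G_modz/G_mul => //; apply/G_modz/G_mul/G_inv.
set g0 := pow_mod D s0 (N ^+ 2).
set g1 := pow_mod D s1 (N ^+ 2).
have Gg0 : Gd N a g0 (s0 * A) by apply: G_pow.
have e1 : (g1 = g0 * (1 + (a%:Z * A) * N) %[mod N ^+ 2])%Z.
  rewrite /g1 (_ : s1 = s0 + a%:Z); last by rewrite -hs; ring.
  rewrite pow_mod_add; last by case: GD.
  rewrite -modzMmr GD.2 modzMmr //.
have Hd : ddlog N g1 = ((ddlog N g0 + a%:Z * A) %% N)%Z.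
  by apply: ddlog_shift => //; case: Gg0.
have Ed : ((ddlog N g1 - (ddlog N g0 - r2)) %% N = (a%:Z * A + r2) %% N)%Z.
  by rewrite Hd modzDml; congr (_ %% _)%Z; ring.
have Gm0 : Gd N a (if N < 2 * ((ddlog N g1 - (ddlog N g0 - r2)) %% N)%Z then c0 else c1) m0.
  by rewrite Ed /m0; case: ifP.
rewrite /scmp_hss -/D -/g0 -/g1.
apply: G_modz; apply: G_mul => //.
case: (pi) => /=; last exact: Gm0.
by apply/G_modz/G_mul => //; apply: G_inv.
Qed.


Lemma num (N a r1 r2 x y L S K : int) (pi : bool) :
  0 <= L -> 0 < a -> a <= K -> 1 <= r1 -> r1 <= S - 1 -> 2 * r2 <= N -> N < 2 * (r1 + r2) ->
  - L <= x -> x <= L -> - L <= y -> y <= L ->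
  2 * (2 * L * S * K + S * K) < N ->
  let A := if ~~ pi then r1 * (x - y + 1) else r1 * (y - x) in
  let m0 : int := if N < 2 * ((a * A + r2) %% N)%Z then 0 else 1 in
  (((if ~~ pi then m0 else 1 + - m0) + 0) %% N)%Z = if y <= x then 0 else 1.
Proof.
move=> L0 a0 aK r10 r1S hr2 hr12 x1 x2 y1 y2 HN A m0.
have SK : 2 <= S * K by nia.
have N1 : 1 < N by nia.
have P1 : r1 <= a * r1 by nia.
have P2 : a * r1 <= S * K by nia.
have e0 : (0 %% N)%Z = 0 by rewrite modz_small //; lia.
have e1 : (1 %% N)%Z = 1 by rewrite modz_small //; lia.
set P := a * r1 in P1 P2.
have EA : a * A = if ~~ pi then P * (x - y + 1) else P * (y - x).
  by rewrite /A /P; case: (pi) => /=; ring.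
have hm : forall T, 0 <= T < N -> (T %% N)%Z = T by move=> T; exact: modz_small.
rewrite /m0 EA; case: (pi) => /=; case: (leP y x) => hxy.
- have hT : 0 <= P * (y - x) + r2 < N by apply/andP; split; nia.
  rewrite (hm _ hT); have -> : (N < 2 * (P * (y - x) + r2)) = false by apply/negbTE; rewrite -leNgt; nia.
  by rewrite (_ : 1 - 1 + 0 = 0 :> int).
- have hT : 0 <= P * (y - x) + r2 < N by apply/andP; split; nia.
  rewrite (hm _ hT); have -> : (N < 2 * (P * (y - x) + r2)) = true by nia.
  by rewrite (_ : 1 - 0 + 0 = 1 :> int).
- have hT : 0 <= P * (x - y + 1) + r2 < N by apply/andP; split; nia.
  rewrite (hm _ hT); have -> : (N < 2 * (P * (x - y + 1) + r2)) = true by nia.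
  by rewrite (_ : 0 + 0 = 0 :> int).
- have hT : 0 <= P * (x - y + 1) + r2 < N by apply/andP; split; nia.
  rewrite (hm _ hT); have -> : (N < 2 * (P * (x - y + 1) + r2)) = false by apply/negbTE; rewrite -leNgt; nia.
  by rewrite (_ : 1 + 0 = 1 :> int).
Qed.


Lemma PoszX (n k : nat) : Posz (n ^ k)%N = (Posz n) ^+ k.
Proof. by rewrite -[LHS]natz natrX natz. Qed.

Lemma sizeN (X Y Z M : nat) : (Z <= X)%N -> 2 * (X%:Z + Y%:Z) < M%:Z -> (Z < M)%N.
Proof. lia. Qed.

Lemma small_lt (p Q P m k : nat) : (p < 2 ^ k)%N -> (2 ^ m.-1 <= Q)%N ->
  (P < 2 ^ m)%N -> (Q < 2 ^ m)%N -> (2 ^ (2 * k) < P * Q)%N -> (p < Q)%N.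
Proof.
move=> pk Qm Pm Qm' hPQ.
case: (leqP k m.-1) => hk.
  by apply: (leq_trans pk); apply: (leq_trans _ Qm); rewrite leq_pexp2l.
have hmk : (m <= k)%N by move: hk; case: m {Qm Pm Qm'} => //.
have : (P * Q < 2 ^ m * 2 ^ m)%N.
  by apply: (leq_trans (n := (P.+1 * Q.+1)%N)); [rewrite mulSn mulnS; lia | apply: leq_mul].
rewrite -expnD => h1.
have : (2 ^ (m + m) <= 2 ^ (2 * k))%N by rewrite leq_pexp2l //; lia.
move: h1 hPQ; move: (2 ^ (m + m))%N (2 ^ (2 * k))%N (P * Q)%N => A B C; lia.
Qed.

Lemma h_pow (n al be : nat) (y0 : int) : 0 <= y0 -> coprimez y0 n%:Z ->
  (2 * be * (2 * al) = totient n)%N ->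
  ((((- y0 ^+ (2 * be)) %% n%:Z)%Z) ^+ (2 * al) = 1 %[mod n%:Z])%Z.
Proof.
case: y0 => [y|y] // _ cy E.
rewrite modzXm exprM sqrrN -exprM -exprM E -PoszX !modz_nat Euler_exp_totient //.

Qed.

Lemma cop_primes (p P : nat) : prime p -> prime P -> p != P -> coprime p P.
Proof. by move=> pp pP ne; rewrite prime_coprime // dvdn_prime2 // ne. Qed.

Lemma nt (P Q p q : nat) : prime P -> prime Q -> prime p -> prime q -> odd p -> odd q ->
  (p %| P.-1)%N -> (q %| Q.-1)%N -> (P %% 4 = 3)%N -> (Q %% 4 = 3)%N ->
  gcdn P.-1 Q.-1 = 2%N -> (p < Q)%N -> (q < P)%N ->
  coprime (2 * (p * q)) (P * Q) /\
  (2 * (P.-1 * Q.-1 %/ (4 * p * q)) * (2 * (p * q)) = totient (P * Q))%N.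
Proof.
move=> pP pQ pp pq op oq dp dq P4 Q4 g lpQ lqP.
have oP : odd P by lia.
have oQ : odd Q by lia.
have P0 : (0 < P.-1)%N by have := prime_gt1 pP; lia.
have Q0 : (0 < Q.-1)%N by have := prime_gt1 pQ; lia.
have lpP : (p < P)%N by have := dvdn_leq P0 dp; lia.
have lqQ : (q < Q)%N by have := dvdn_leq Q0 dq; lia.
have p2 : p != 2%N by apply/eqP => e; rewrite e in op.
have p3 : (2 < p)%N by have := prime_gt1 pp; move: p2; lia.
have PQ : P != Q.
  apply/eqP => ePQ; rewrite ePQ gcdnn in g.
  rewrite ePQ in dp; have := dvdn_leq Q0 dp; lia.
split.
  rewrite coprimeMl coprimeMl !coprimeMr !coprime2n oP oQ /=.
  rewrite !cop_primes //; apply/eqP; lia.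
rewrite totient_coprime ?cop_primes // !totient_prime //.
have d2p : (2 * p %| P.-1)%N.
  by rewrite Gauss_dvd ?coprime2n // dp andbT; lia.
have d2q : (2 * q %| Q.-1)%N.
  by rewrite Gauss_dvd ?coprime2n // dq andbT; lia.
have := dvdn_mul d2p d2q; rewrite (_ : (2 * p * (2 * q) = 4 * p * q)%N); last by ring.
move/divnK => E; rewrite -[in RHS]E; ring.
Qed.

Lemma idx_le (l s k : nat) : (2 * (2 * k) <= l + 1 + s + 4 * k + 1)%N.
Proof. lia. Qed.

Lemma half4 (k : nat) : ((4 * k)./2 = 2 * k)%N.
Proof. by rewrite (_ : (4 * k = (2 * k).*2)%N) ?doubleK //; lia. Qed.

Lemma aK (p q k : nat) : (p < 2 ^ (2 * k))%N -> (q < 2 ^ (2 * k))%N ->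
  (2 * (p * q) <= 2 ^ (4 * k + 1))%N.
Proof.
move=> hp hq; rewrite expnD expn1 mulnC leq_pmul2r //.
have -> : (4 * k = 2 * k + 2 * k)%N by lia.
rewrite expnD.
by apply: leq_mul; apply: ltnW; [exact: hp | exact: hq].
Qed.


Theorem theorem2
  (kappa nk l sigma : nat) (P Q p q : nat) (y0 : int)
  (s0 s1 : int) (x y : int) (rx ry ra rb : nat) (r1 r2 : int) (pi : bool) :
  let lk := (4 * kappa)%N in
  (* key generation *)
  prime P -> prime Q -> (2 ^ (nk./2).-1 <= P < 2 ^ (nk./2))%N ->
  (2 ^ (nk./2).-1 <= Q < 2 ^ (nk./2))%N ->
  prime p -> prime q -> odd p -> odd q ->
  (2 ^ (lk./2).-1 <= p < 2 ^ (lk./2))%N -> (2 ^ (lk./2).-1 <= q < 2 ^ (lk./2))%N ->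
  (p %| P.-1)%N -> (q %| Q.-1)%N ->
  (P %% 4 = 3)%N -> (Q %% 4 = 3)%N ->
  gcdn P.-1 Q.-1 = 2%N ->
  let alpha := (p * q)%N in
  let beta := (P.-1 * Q.-1 %/ (4 * p * q))%N in
  coprime alpha beta ->
  let N : int := (P * Q)%N%:Z in
  (0 <= y0 < N) -> coprimez y0 N ->
  let h : int := ((- y0 ^+ (2 * beta)) %% N)%Z in
  (* standing parameter assumption: N/2 > 2^(l+1+sigma+lk+1) + 2^(sigma+lk+1) *)
  2 * ((2 ^ (l + 1 + sigma + lk + 1))%N%:Z + (2 ^ (sigma + lk + 1))%N%:Z) < N ->
  (* shares of 2 alpha *)
  s1 - s0 = 2 * alpha%:Z ->
  (* encryption randomness in {0,1}^lk *)
  (rx < 2 ^ lk)%N -> (ry < 2 ^ lk)%N -> (ra < 2 ^ lk)%N -> (rb < 2 ^ lk)%N ->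
  (* inputs *)
  - (2 ^ l)%N%:Z <= x <= (2 ^ l)%N%:Z ->
  - (2 ^ l)%N%:Z <= y <= (2 ^ l)%N%:Z ->
  (* S_0's random choices *)
  1 <= r1 <= (2 ^ sigma)%N%:Z - 1 ->
  2 * r2 <= N -> N < 2 * (r1 + r2) ->
  fp_dec N alpha%:Z
    (scmp_hss N s0 s1 (fp_enc N h 0 ra) (fp_enc N h 1 rb)
       (fp_enc N h x rx) (fp_enc N h y ry) r1 r2 pi)
  = (if y <= x then 0 else 1).
Proof.
move=> lk pP pQ /andP[P1 P2] /andP[Q1 Q2] pp pq op oq /andP[p1 p2] /andP[q1 q2]
  dpP dqQ P4 Q4 gPQ alpha beta cab N /andP[y00 y0N] cy0 h HN hs _ _ _ _
  /andP[x1 x2] /andP[y1 y2] /andP[r11 r12] hr2 hr12.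
rewrite /lk half4 in p2 q2.
set a := (2 * alpha)%N.
have E1 : (2 ^ (l + 1 + sigma + lk + 1) = 2 * 2 ^ l * 2 ^ sigma * 2 ^ (lk + 1))%N.
  by rewrite !expnD !expn1; ring.
have E2 : (2 ^ (sigma + lk + 1) = 2 ^ sigma * 2 ^ (lk + 1))%N.
  by rewrite !expnD; ring.
have HNn : (2 ^ (2 * (2 * kappa)) < P * Q)%N.
  apply: (@sizeN _ _ _ (P * Q)%N _ HN); rewrite leq_pexp2l //; exact: idx_le.
have lpQ : (p < Q)%N by apply: (small_lt _ _ _ _ _ p2 Q1 P2 Q2 HNn).
have lqP : (q < P)%N.
  by apply: (small_lt _ _ _ _ _ q2 P1 Q2 P2); rewrite [(Q * P)%N]mulnC.
have [cop E] := nt _ _ _ _ pP pQ pp pq op oq dpP dqQ P4 Q4 gPQ lpQ lqP.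
have a0 : (0 < a)%N by rewrite /a /alpha !muln_gt0 !prime_gt0.
have hh : ((h ^+ a) = 1 %[mod N])%Z by apply: (h_pow _ _ _ _ y00 cy0).

have N1 : 1 < N.
  by rewrite /N ltz_nat; apply: (leq_trans _ (leq_mul (prime_gt1 pP) (prime_gt1 pQ))).
have hs' : s1 - s0 = a%:Z by rewrite hs /a PoszM.
have Gout := proto _ _ _ _ _ _ _ _ x y r1 r2 pi N1 hs' (G_enc _ _ _ 0 ra a0 hh) (G_enc _ _ _ 1 rb a0 hh)
  (G_enc _ _ _ x rx a0 hh) (G_enc _ _ _ y ry a0 hh).
rewrite (dec_G _ _ _ _ N1 _ Gout); last by rewrite coprimezE.
have HN' : 2 * (2 * (2 ^ l)%N%:Z * (2 ^ sigma)%N%:Z * (2 ^ (lk + 1))%N%:Z +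
    (2 ^ sigma)%N%:Z * (2 ^ (lk + 1))%N%:Z) < N.
  by move: HN; rewrite E1 E2 !PoszM => H; exact: H.
apply: (num _ _ _ _ _ _ _ _ _ _ _ _ _ r11 r12 hr2 hr12 x1 x2 y1 y2 HN') => //.
- by rewrite lez_nat /a /alpha /lk; apply: aK.
Qed.
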